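(* Every $\mathrm{LTL}(\sim)$-formula $\varphi$ that does not contain the operator $\mathsf X$ is stutter-invariant: for all teams $T,T'$ with $T\equiv_{\mathrm{st}}T'$ we have $T\models\varphi\iff T'\models\varphi$.
   Context: Let $\mathrm{AP}$ be a countably infinite set of atomic propositions. A trace is an infinite sequence $t=t(0)t(1)\cdots\in(\wp\mathrm{AP})^\omega$, and $t^i=t(i)t(i+1)\cdots$. A team is a (possibly empty) set $T$ of traces, and $T^i=\{t^i: t\in T\}$. Formulas of $\mathrm{LTL}(\sim)$ are given by $\varphi::=p\mid\neg\varphi\mid\varphi\wedge\varphi\mid\varphi\vee\varphi\mid\mathsf X\varphi\mid\mathsf F\varphi\mid\mathsf G\varphi\mid\varphi\,\mathsf U\,\varphi\mid\varphi\,\mathsf R\,\varphi\mid{\sim}\varphi$ with $p\in\mathrm{AP}$. Synchronous team semantics: $T\models p$ iff $p\in t(0)$ for all $t\in T$; $T\models\neg\varphi$ iff $\{t\}\not\models\varphi$ for all $t\in T$; $T\models\varphi\wedge\psi$ iff $T\models\varphi$ and $T\models\psi$; $T\models\varphi\vee\psi$ iff $T=S\cup U$ for some $S,U$ with $S\models\varphi$ and $U\models\psi$; $T\models\mathsf X\varphi$ iff $T^1\models\varphi$; $T\models\mathsf F\varphi$ iff $T^k\models\varphi$ for some $k\ge0$; $T\models\mathsf G\varphi$ iff $T^k\models\varphi$ for all $k\ge0$; $T\models\varphi\,\mathsf U\,\psi$ iff there is $k\ge0$ with $T^k\models\psi$ and $T^j\models\varphi$ for all $j<k$; $T\models\varphi\,\mathsf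 R\,\psi$ iff for all $k\ge0$, $T^k\models\psi$ or $T^j\models\varphi$ for some $j<k$; $T\models{\sim}\varphi$ iff $T\not\models\varphi$. A stuttering function of a trace $t$ is a strictly increasing function $f:\mathbb N\to\mathbb N$ with $f(0)=0$ such that $t(f(k))=t(f(k)+1)=\cdots=t(f(k+1)-1)$ for all $k\ge0$. A stuttering function of a team $T$ is a function that is a stuttering function of every $t\in T$. For $f:\mathbb N\to\mathbb N$, $t[f]:=t(f(0))t(f(1))t(f(2))\cdots$ and $T[f]:=\{t[f]:t\in T\}$. Teams $T,T'$ are stutter-equivalent ($T\equiv_{\mathrm{st}}T'$) if there are a stuttering function $f$ of $T$ and a stuttering function $f'$ of $T'$ with $T[f]=T'[f']$. *)

(* Defs.v *)
From Stdlib Require Import Arith.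

Definition AP := nat.
(* A letter is a subset of AP, given by its characteristic function. *)
Definition letter := AP -> bool.
Definition trace := nat -> letter.
(* A team is a (possibly empty) set of traces. *)
Definition team := trace -> Prop.

Definition tsuffix (t : trace) (i : nat) : trace := fun n => t (i + n).
Definition team_suffix (T : team) (i : nat) : team :=
  fun u => exists t, T t /\ u = tsuffix t i.
Definition singleton (t : trace) : team := fun u => u = t.

Inductive formula : Type :=
| Atom : AP -> formula
| Neg : formula -> formula
| And : formula -> formula -> formula
| Or : formula -> formula -> formula
| Next : formula -> formula
| Fut : formula -> formula
| Glob : formula -> formula
| Until : formula -> formula -> formula
| Release : formula -> formula -> formula
| Sim : formula -> formula.

Fixpoint sat (T : team) (phi : formula) {struct phi} : Prop :=
  match phi with
  | Atom p => forall t, T t -> t 0 p = true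
  | Neg a => forall t, T t -> ~ sat (singleton t) a
  | And a b => sat T a /\ sat T b
  | Or a b => exists S U : team,
      (forall t, T t <-> (S t \/ U t)) /\ sat S a /\ sat U b
  | Next a => sat (team_suffix T 1) a
  | Fut a => exists k, sat (team_suffix T k) a
  | Glob a => forall k, sat (team_suffix T k) a
  | Until a b => exists k, sat (team_suffix T k) b /\
      forall j, j < k -> sat (team_suffix T j) a
  | Release a b => forall k, sat (team_suffix T k) b \/
      exists j, j < k /\ sat (team_suffix T j) a
  | Sim a => ~ sat T a
  end.

Fixpoint X_free (phi : formula) : bool :=
  match phi with
  | Atom _ => true
  | Neg a | Fut a | Glob a | Sim a => X_free a
  | Next _ => false
  | And a b | Or a b | Until a b | Release a b => X_free a && X_free b
  end.

Definition stuttering_fun (t : trace) (f : nat -> nat) : Prop :=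
  (forall k, f k < f (S k)) /\ f 0 = 0 /\
  (forall k j, f k <= j < f (S k) -> t j = t (f k)).

Definition team_stuttering_fun (T : team) (f : nat -> nat) : Prop :=
  forall t, T t -> stuttering_fun t f.

Definition tcomp (t : trace) (f : nat -> nat) : trace := fun k => t (f k).
Definition team_comp (T : team) (f : nat -> nat) : team :=
  fun u => exists t, T t /\ u = tcomp t f.

Definition stutter_equiv (T T' : team) : Prop :=
  exists f f', team_stuttering_fun T f /\ team_stuttering_fun T' f' /\
    (forall u, team_comp T f u <-> team_comp T' f' u).

(* Main.v *)
Require Import Defs.
From Stdlib Require Import Arith Lia Classical FunctionalExtensionality.

Definition incr0 (f : nat -> nat) := (forall k, f k < f (S k)) /\ f 0 = 0.
Definition blocks (T : team) (f : nat -> nat) :=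
  forall t, T t -> forall k j, f k <= j < f (S k) -> t j = t (f k).

Lemma sat_ext : forall phi T T', (forall t, T t <-> T' t) -> sat T phi -> sat T' phi.
Proof.
  assert (SE : forall T T' k, (forall t, T t <-> T' t) ->
     forall t, team_suffix T k t <-> team_suffix T' k t).
  { intros T T' k H t; unfold team_suffix; split; intros [u [Hu ->]]; exists u;
    split; auto; apply H; auto. }
  induction phi; intros T T' H; simpl.
  - intros Hs t Ht; apply Hs, H, Ht.
  - intros Hs t Ht; apply Hs, H, Ht.
  - intros [A B]; split; eauto.
  - intros [S [U [HSU [A B]]]]; exists S, U; split; auto.
    intros t; rewrite <- H; auto.
  - apply IHphi, SE, H.
  - intros [k Hk]; exists k; eapply IHphi; [apply SE, H|]; auto.
  - intros Hk k; eapply IHphi; [apply SE, H|]; auto.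
  - intros [k [Hk Hj]]; exists k; split; [eapply IHphi2; [apply SE, H|]; auto|].
    intros j Hj'; eapply IHphi1; [apply SE, H|]; auto.
  - intros Hk k; destruct (Hk k) as [B|[j [Hj A]]]; [left|right].
    + eapply IHphi2; [apply SE, H|]; auto.
    + exists j; split; auto; eapply IHphi1; [apply SE, H|]; auto.
  - intros Hn Hs; apply Hn; eapply IHphi; [|exact Hs]; intros t; rewrite H; tauto.
Qed.

Lemma sat_ext_iff : forall phi T T', (forall t, T t <-> T' t) -> (sat T phi <-> sat T' phi).
Proof.
  intros; split; apply sat_ext; firstorder.
Qed.

Fixpoint idx (f : nat -> nat) (j : nat) : nat :=
  match j with
  | 0 => 0
  | S j' => let k := idx f j' in if f (S k) <=? S j' then S k else k
  end.

Section S.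
Variable f : nat -> nat.
Hypothesis Hf : incr0 f.

Lemma fmono : forall a b, a < b -> f a < f b.
Proof.
  destruct Hf as [H0 _]. intros a b H; induction H.
  - apply H0.
  - specialize (H0 m); lia.
Qed.

Lemma fmono_le : forall a b, a <= b -> f a <= f b.
Proof.
  intros a b H; destruct (Nat.eq_dec a b); [subst; lia|].
  pose proof (fmono a b); lia.
Qed.

Lemma idx_spec : forall j, f (idx f j) <= j < f (S (idx f j)).
Proof.
  destruct Hf as [H0 H1].
  induction j; simpl.
  - rewrite H1; specialize (H0 0); lia.
  - destruct (Nat.leb_spec (f (S (idx f j))) (S j)).
    + specialize (H0 (S (idx f j))); lia.
    + lia.
Qed.

Lemma idx_unique : forall k j, f k <= j < f (S k) -> idx f j = k.
Proof.
  intros k j H. pose proof (idx_spec j).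
  destruct (lt_eq_lt_dec (idx f j) k) as [[L|E]|L]; auto.
  - pose proof (fmono_le (S (idx f j)) k L); lia.
  - pose proof (fmono_le (S k) (idx f j) L); lia.
Qed.

Lemma idx_f : forall k, idx f (f k) = k.
Proof.
  intros k; apply idx_unique. destruct Hf as [G0 _]; specialize (G0 k); lia.
Qed.

Lemma idx_lt : forall i k, i < f k -> idx f i < k.
Proof.
  intros i k H. pose proof (idx_spec i).
  destruct (le_lt_dec k (idx f i)); auto.
  pose proof (fmono_le _ _ l); lia.
Qed.

Lemma lt_idx : forall m j, m < idx f j -> f m < j.
Proof.
  intros m j H. pose proof (idx_spec j).
  pose proof (fmono_le (S m) (idx f j) H). destruct Hf as [G0 _]; specialize (G0 m); lia.
Qed.

Definition h (j n : nat) : nat :=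
  match n with 0 => 0 | S n => f (S (idx f j) + n) - j end.

Lemma h_incr : forall j, incr0 (h j).
Proof.
  intros j; split; auto.
  pose proof (idx_spec j).
  intros [|n]; unfold h; simpl.
  - rewrite Nat.add_0_r; lia.
  - pose proof (fmono_le (S (idx f j)) (S (idx f j) + n) ltac:(lia)).
    pose proof (fmono (S (idx f j) + n) (S (idx f j) + S n) ltac:(lia)). idtac.
    simpl in *; lia.
Qed.

Lemma h_blocks : forall T j, blocks T f -> blocks (team_suffix T j) (h j).
Proof.
  intros T j HB u [t [Ht ->]] k i Hi. unfold tsuffix.
  pose proof (idx_spec j).
  destruct k as [|n]; unfold h in *; cbv beta iota in *.
  - rewrite Nat.add_0_r in Hi. rewrite Nat.add_0_r.
    rewrite (HB t Ht (idx f j) (j + i)) by lia.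
    rewrite (HB t Ht (idx f j) j) by lia. reflexivity.
  - pose proof (fmono_le (S (idx f j)) (S (idx f j) + n) ltac:(lia)).
    replace (j + (f (S (idx f j) + n) - j)) with (f (S (idx f j) + n)) by lia.
    apply (HB t Ht). replace (S (S (idx f j) + n)) with (S (idx f j) + S n) by lia; lia.
Qed.

Lemma h_suffix : forall T j, blocks T f -> forall u,
  team_suffix (team_comp T f) (idx f j) u <-> team_comp (team_suffix T j) (h j) u.
Proof.
  intros T j HB u. pose proof (idx_spec j). split.
  - intros [v [[t [Ht ->]] ->]].
    exists (tsuffix t j); split; [exists t; auto|].
    apply functional_extensionality; intros n; unfold tsuffix, tcomp.
    destruct n as [|n]; unfold h; cbv beta iota.
    + rewrite Nat.add_0_r, Nat.add_0_r. symmetry; apply (HB t Ht); lia.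
    + pose proof (fmono_le (S (idx f j)) (S (idx f j) + n) ltac:(lia)).
      replace (j + (f (S (idx f j) + n) - j)) with (f (S (idx f j) + n)) by lia.
      f_equal; f_equal; lia.
  - intros [v [[t [Ht ->]] ->]].
    exists (tcomp t f); split; [exists t; auto|].
    apply functional_extensionality; intros n; unfold tsuffix, tcomp.
    destruct n as [|n]; unfold h; cbv beta iota.
    + rewrite Nat.add_0_r, Nat.add_0_r. apply (HB t Ht); lia.
    + pose proof (fmono_le (S (idx f j)) (S (idx f j) + n) ltac:(lia)).
      replace (j + (f (S (idx f j) + n) - j)) with (f (S (idx f j) + n)) by lia.
      f_equal; f_equal; lia.
Qed.

End S.

Lemma key : forall phi, X_free phi = true -> forall T f, incr0 f -> blocks T f ->
  (sat T phi <-> sat (team_comp T f) phi).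
Proof.
  induction phi; simpl; intros HX T f Hf HB;
    try (apply andb_prop in HX; destruct HX as [HX1 HX2]).
  - destruct Hf as [_ H0]. split.
    + intros H u [t [Ht ->]]; unfold tcomp; rewrite H0; auto.
    + intros H t Ht. rewrite <- H0. apply (H (tcomp t f)). exists t; auto.
  - assert (Hs : forall t, T t -> (sat (singleton t) phi <-> sat (singleton (tcomp t f)) phi)).
    { intros t Ht. rewrite (IHphi HX (singleton t) f Hf).
      - apply sat_ext_iff. intros u; unfold team_comp, singleton; split.
        + intros [v [-> ->]]; auto.
        + intros ->; exists t; auto.
      - intros v Hv; unfold singleton in Hv; subst; apply HB; auto. }
    split.
    + intros H u [t [Ht ->]]. rewrite <- Hs; auto.
    + intros H t Ht. rewrite Hs; auto. apply H; exists t; auto.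
  - rewrite (IHphi1 HX1 T f), (IHphi2 HX2 T f); tauto.
  - split.
    + intros [S [U [HSU [A B]]]]. exists (team_comp S f), (team_comp U f).
      assert (BS : blocks S f) by (intros t Ht; apply HB, HSU; auto).
      assert (BU : blocks U f) by (intros t Ht; apply HB, HSU; auto).
      split; [|split].
      * intros u; split.
        -- intros [t [Ht ->]]. apply HSU in Ht as [Ht|Ht]; [left|right]; exists t; auto.
        -- intros [[t [Ht ->]]|[t [Ht ->]]]; exists t; split; auto; apply HSU; auto.
      * apply IHphi1; auto.
      * apply IHphi2; auto.
    + intros [S' [U' [HSU [A B]]]].
      exists (fun t => T t /\ S' (tcomp t f)), (fun t => T t /\ U' (tcomp t f)).
      assert (HT : forall t, T t -> team_comp T f (tcomp t f)) by (intros t Ht; exists t; auto).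
      split; [|split].
      * intros t; split.
        -- intros Ht. destruct (proj1 (HSU _) (HT t Ht)); auto.
        -- tauto.
      * apply (IHphi1 HX1 _ f Hf); [intros t Ht; apply HB, Ht|].
        eapply sat_ext; [|exact A]. intros u; split.
        -- intros Hu. destruct (proj2 (HSU u) (or_introl Hu)) as [t [Ht ->]].
           exists t; auto.
        -- intros [t [[Ht Hs] ->]]; auto.
      * apply (IHphi2 HX2 _ f Hf); [intros t Ht; apply HB, Ht|].
        eapply sat_ext; [|exact B]. intros u; split.
        -- intros Hu. destruct (proj2 (HSU u) (or_intror Hu)) as [t [Ht ->]].
           exists t; auto.
        -- intros [t [[Ht Hs] ->]]; auto.
  - discriminate.
  - assert (E : forall j, sat (team_suffix T j) phi <->
                 sat (team_suffix (team_comp T f) (idx f j)) phi).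
    { intros j. rewrite (IHphi HX _ (h f j) (h_incr f Hf j) (h_blocks f Hf T j HB)).
      apply sat_ext_iff. intros u; rewrite (h_suffix f Hf T j HB); tauto. }
    split.
    + intros [j Hj]; exists (idx f j); apply E; auto.
    + intros [k Hk]; exists (f k); apply E; rewrite idx_f; auto.
  - assert (E : forall j, sat (team_suffix T j) phi <->
                 sat (team_suffix (team_comp T f) (idx f j)) phi).
    { intros j. rewrite (IHphi HX _ (h f j) (h_incr f Hf j) (h_blocks f Hf T j HB)).
      apply sat_ext_iff. intros u; rewrite (h_suffix f Hf T j HB); tauto. }
    split.
    + intros H k. specialize (E (f k)). rewrite idx_f in E by auto. apply E, H.
    + intros H j. apply E, H.
  - assert (E1 : forall j, sat (team_suffix T j) phi1 <->
                 sat (team_suffix (team_comp T f) (idx f j)) phi1).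
    { intros j. rewrite (IHphi1 HX1 _ (h f j) (h_incr f Hf j) (h_blocks f Hf T j HB)).
      apply sat_ext_iff. intros u; rewrite (h_suffix f Hf T j HB); tauto. }
    assert (E2 : forall j, sat (team_suffix T j) phi2 <->
                 sat (team_suffix (team_comp T f) (idx f j)) phi2).
    { intros j. rewrite (IHphi2 HX2 _ (h f j) (h_incr f Hf j) (h_blocks f Hf T j HB)).
      apply sat_ext_iff. intros u; rewrite (h_suffix f Hf T j HB); tauto. }
    split.
    + intros [j [Hb Ha]]. exists (idx f j); split; [apply E2; auto|].
      intros m Hm. specialize (E1 (f m)). rewrite idx_f in E1 by auto.
      apply E1, Ha, (lt_idx f Hf); auto.
    + intros [k [Hb Ha]]. exists (f k); split.
      * apply E2; rewrite idx_f; auto.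
      * intros i Hi. apply E1, Ha, (idx_lt f Hf); auto.
  - assert (E1 : forall j, sat (team_suffix T j) phi1 <->
                 sat (team_suffix (team_comp T f) (idx f j)) phi1).
    { intros j. rewrite (IHphi1 HX1 _ (h f j) (h_incr f Hf j) (h_blocks f Hf T j HB)).
      apply sat_ext_iff. intros u; rewrite (h_suffix f Hf T j HB); tauto. }
    assert (E2 : forall j, sat (team_suffix T j) phi2 <->
                 sat (team_suffix (team_comp T f) (idx f j)) phi2).
    { intros j. rewrite (IHphi2 HX2 _ (h f j) (h_incr f Hf j) (h_blocks f Hf T j HB)).
      apply sat_ext_iff. intros u; rewrite (h_suffix f Hf T j HB); tauto. }
    split.
    + intros H k. destruct (H (f k)) as [B|[i [Hi A]]].
      * left. specialize (E2 (f k)). rewrite idx_f in E2 by auto. apply E2, B.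
      * right. exists (idx f i); split; [apply (idx_lt f Hf); auto|]. apply E1, A.
    + intros H j. destruct (H (idx f j)) as [B|[m [Hm A]]].
      * left. apply E2, B.
      * right. exists (f m); split; [apply (lt_idx f Hf); auto|].
        apply E1. rewrite idx_f; auto.
  - rewrite (IHphi HX T f Hf HB); tauto.
Qed.

Lemma stut_comp : forall phi, X_free phi = true -> forall T f, team_stuttering_fun T f ->
  (sat T phi <-> sat (team_comp T f) phi).
Proof.
  intros phi HX T f HS.
  destruct (classic (exists t, T t)) as [[t Ht]|Hn].
  - apply key; auto.
    + destruct (HS t Ht) as [A [B _]]; split; auto.
    + intros u Hu; apply HS; auto.
  - apply sat_ext_iff. intros u; split.
    + intros Hu; exfalso; apply Hn; eauto.
    + intros [v [Hv _]]; exfalso; apply Hn; eauto.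
Qed.

Theorem mainTheorem9 : forall (phi : formula), X_free phi = true ->
  forall T T' : team, stutter_equiv T T' -> (sat T phi <-> sat T' phi).
Proof.
  intros phi HX T T' [f [f' [H1 [H2 H3]]]].
  rewrite (stut_comp phi HX T f H1), (stut_comp phi HX T' f' H2).
  apply sat_ext_iff; auto.
Qed.
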